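(* Let $(E,\rho)$ be a complete partial $v$-generalized metric space and let $S:E\to E$ satisfy $\rho(Su,Sw)\le\lambda[\rho(u,Su)+\rho(w,Sw)]$ for all $u,w\in E$, where $\lambda\in[0,\tfrac12)$. Then $S$ has a unique fixed point $b\in E$, and $\rho(b,b)=0$.
   Context: Let $E$ be a nonempty set and $v\in\mathbb{N}$. $(E,\rho)$, with $\rho:E\times E\to[0,\infty)$, is a partial $v$-generalized metric space if for all $u,w,z_1,\dots,z_v\in E$: (1) $u=w$ iff $\rho(u,u)=\rho(u,w)=\rho(w,w)$; (2) $\rho(u,u)\le\rho(u,w)$; (3) $\rho(u,w)=\rho(w,u)$; (4) $\rho(u,w)\le\rho(u,z_1)+\rho(z_1,z_2)+\dots+\rho(z_{v-1},z_v)+\rho(z_v,w)-\sum_{i=1}^v\rho(z_i,z_i)$. A sequence $\{u_n\}$ in $E$ converges to $u\in E$ if $\lim_{n\to\infty}\rho(u_n,u)=\rho(u,u)$; it is Cauchy if $\lim_{n,m\to\infty}\rho(u_n,u_m)$ exists and is finite. $(E,\rho)$ is complete if for every Cauchy sequence $\{u_n\}$ there is $u\in E$ with $\lim_{n,m\to\infty}\rho(u_n,u_m)=\lim_{n\to\infty}\rho(u_n,u)=\rho(u,u)$. *)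

(* Defs.v *)
From Stdlib Require Import Reals Lra.
Open Scope R_scope.

(* Points z_1..z_v of axiom (4) are given by a function z : nat -> E,
   only z 1, ..., z v being used. *)

(* chain sum rho(u,z_1)+rho(z_1,z_2)+...+rho(z_{v-1},z_v)+rho(z_v,w) - sum_{i=1}^v rho(z_i,z_i) *)
Definition chain_bound {E : Type} (rho : E -> E -> R) (v : nat) (u w : E) (z : nat -> E) : R :=
  rho u (z 1%nat)
  + sum_f_R0 (fun i => rho (z (S i)) (z (S (S i)))) (Nat.pred (Nat.pred v))
  + rho (z v) w
  - sum_f_R0 (fun i => rho (z (S i)) (z (S i))) (Nat.pred v).

(* Note: for v = 1 the middle sum must be empty; we handle it separately. *)
Definition chain_bound' {E : Type} (rho : E -> E -> R) (v : nat) (u w : E) (z : nat -> E) : R :=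
  match v with
  | O => rho u w
  | S O => rho u (z 1%nat) + rho (z 1%nat) w - rho (z 1%nat) (z 1%nat)
  | _ => chain_bound rho v u w z
  end.

Definition partial_v_gen_metric {E : Type} (v : nat) (rho : E -> E -> R) : Prop :=
  (forall u w, 0 <= rho u w) /\
  (forall u w, u = w <-> (rho u u = rho u w /\ rho u w = rho w w)) /\
  (forall u w, rho u u <= rho u w) /\
  (forall u w, rho u w = rho w u) /\
  (forall u w (z : nat -> E), rho u w <= chain_bound' rho v u w z).

Definition pconverges {E : Type} (rho : E -> E -> R) (x : nat -> E) (u : E) : Prop :=
  Un_cv (fun n => rho (x n) u) (rho u u).

Definition double_lim {E : Type} (rho : E -> E -> R) (x : nat -> E) (L : R) : Prop :=
  forall eps, eps > 0 -> exists N, forall n m, (n >= N)%nat -> (m >= N)%nat ->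
    Rabs (rho (x n) (x m) - L) < eps.

Definition pCauchy {E : Type} (rho : E -> E -> R) (x : nat -> E) : Prop :=
  exists L : R, double_lim rho x L.

Definition pcomplete {E : Type} (rho : E -> E -> R) : Prop :=
  forall x : nat -> E, pCauchy rho x ->
    exists u : E, double_lim rho x (rho u u) /\ pconverges rho x u.

(* Main.v *)
Require Import Defs.
From Stdlib Require Import Reals Lra Lia.
Open Scope R_scope.

Lemma tri_pm (E : Type) (v : nat) (rho : E -> E -> R) :
  (1 <= v)%nat -> partial_v_gen_metric v rho ->
  forall u w a, rho u w <= rho u a + rho a w - rho a a.
Proof.
  intros Hv H u w a. destruct H as (_&_&_&_&H4).
  specialize (H4 u w (fun _ => a)).
  destruct v as [|[|v]]; simpl in H4.
  - lia.
  - lra.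
  - unfold chain_bound in H4. simpl in H4.
    rewrite !sum_cte in H4. rewrite !S_INR in H4.
    nra.
Qed.

Lemma zero_of_small (a : R) : 0 <= a -> (forall eps, eps > 0 -> a < eps) -> a = 0.
Proof.
  intros H0 H. destruct (Req_dec a 0); auto.
  assert (a < a) by (apply H; lra). lra.
Qed.

Theorem mainTheorem6 (E : Type) (v : nat) (rho : E -> E -> R) (S : E -> E) (lambda : R) :
  (1 <= v)%nat ->
  inhabited E ->
  partial_v_gen_metric v rho ->
  pcomplete rho ->
  0 <= lambda -> lambda < 1 / 2 ->
  (forall u w, rho (S u) (S w) <= lambda * (rho u (S u) + rho w (S w))) ->
  exists b : E, S b = b /\ rho b b = 0 /\ (forall c : E, S c = c -> c = b).
Proof.
  intros Hv [x0] Hpm Hc Hl0 Hl1 HS.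
  pose proof Hpm as (Hnn&Heq&Hself&Hsym&_).
  pose proof (tri_pm E v rho Hv Hpm) as Htri.
  set (x := fun n => Nat.iter n S x0).
  set (d := fun n => rho (x n) (x (Datatypes.S n))).
  set (k := lambda / (1 - lambda)).
  assert (Hk0 : 0 <= k) by (unfold k, Rdiv; apply Rmult_le_pos; [lra| left; apply Rinv_0_lt_compat; lra]).
  assert (Hk1 : k < 1).
  { unfold k. apply (Rmult_lt_reg_r (1 - lambda)); [lra|].
    unfold Rdiv. rewrite Rmult_assoc, Rinv_l; lra. }
  assert (Hd : forall n, d (Datatypes.S n) <= k * d n).
  { intro n. unfold d.
    assert (H1 : rho (x (Datatypes.S n)) (x (Datatypes.S (Datatypes.S n)))
                 <= lambda * (rho (x n) (x (Datatypes.S n)) +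
                     rho (x (Datatypes.S n)) (x (Datatypes.S (Datatypes.S n))))).
    { apply (HS (x n) (x (Datatypes.S n))). }
    set (a := rho (x n) (x (Datatypes.S n))) in *.
    set (b := rho (x (Datatypes.S n)) (x (Datatypes.S (Datatypes.S n)))) in *.
    assert (b * (1 - lambda) <= lambda * a) by lra.
    unfold k. apply (Rmult_le_reg_r (1 - lambda)); [lra|].
    replace (lambda / (1 - lambda) * a * (1 - lambda)) with (lambda * a); [lra|].
    field. lra. }
  assert (Hdk : forall n, d n <= k ^ n * d O).
  { induction n; simpl; [lra|].
    specialize (Hd n). assert (k * d n <= k * (k ^ n * d O)) by (apply Rmult_le_compat_l; lra).
    lra. }
  assert (Hdsmall : forall eps, eps > 0 -> exists N, forall n, (n >= N)%nat -> d n < eps).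
  { intros eps He.
    assert (Hd0 : 0 <= d O) by apply Hnn.
    destruct (pow_lt_1_zero k ltac:(rewrite Rabs_right; lra) (eps / (d O + 1)))
      as [N HN].
    { apply Rdiv_lt_0_compat; lra. }
    exists N. intros n Hn. specialize (HN n Hn). specialize (Hdk n).
    rewrite Rabs_right in HN by (apply Rle_ge, pow_le; lra).
    assert (k ^ n * d O <= k ^ n * (d O + 1)).
    { apply Rmult_le_compat_l; [apply pow_le; lra| lra]. }
    assert (k ^ n * (d O + 1) < eps).
    { apply (Rmult_lt_compat_r (d O + 1)) in HN; [|lra].
      unfold Rdiv in HN. rewrite Rmult_assoc, Rinv_l in HN; lra. }
    lra. }
  assert (HxS : forall n, x (Datatypes.S n) = S (x n)) by reflexivity.
  assert (Hcau : double_lim rho x 0).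
  { intros eps He. destruct (Hdsmall eps He) as [N HN].
    exists (Datatypes.S N). intros n m Hn Hm.
    destruct n as [|n]; [lia|]. destruct m as [|m]; [lia|].
    rewrite !HxS. specialize (HS (x n) (x m)).
    assert (d n < eps) by (apply HN; lia).
    assert (d m < eps) by (apply HN; lia).
    unfold d in *. rewrite !HxS in *.
    pose proof (Hnn (S (x n)) (S (x m))).
    rewrite Rminus_0_r, Rabs_right by lra. nra. }
  destruct (Hc x (ex_intro _ 0 Hcau)) as [u [Hu1 Hu2]].
  assert (Huu : rho u u = 0).
  { apply zero_of_small; [apply Hnn|]. intros eps He.
    destruct (Hcau (eps/2) ltac:(lra)) as [N1 HN1].
    destruct (Hu1 (eps/2) ltac:(lra)) as [N2 HN2].
    specialize (HN1 (max N1 N2) (max N1 N2) ltac:(lia) ltac:(lia)).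
    specialize (HN2 (max N1 N2) (max N1 N2) ltac:(lia) ltac:(lia)).
    rewrite Rminus_0_r in HN1.
    pose proof (Rabs_triang_inv (rho u u) (rho (x (max N1 N2)) (x (max N1 N2)))).
    pose proof (Rabs_pos (rho (x (max N1 N2)) (x (max N1 N2)))).  
    pose proof (Rabs_pos (rho u u)). pose proof (Rle_abs (rho u u)).
    rewrite Rabs_minus_sym in HN2. lra. }
  unfold pconverges in Hu2. rewrite Huu in Hu2.
  assert (HSu : rho u (S u) = 0).
  { apply zero_of_small; [apply Hnn|]. intros eps He.
    destruct (Hu2 (eps/4) ltac:(lra)) as [N1 HN1].
    destruct (Hdsmall (eps/4) ltac:(lra)) as [N2 HN2].
    set (n := max N1 N2).
    specialize (HN1 (Datatypes.S n) ltac:(unfold n; lia)).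
    specialize (HN2 n ltac:(unfold n; lia)).
    unfold R_dist in HN1. rewrite Rminus_0_r in HN1.
    pose proof (Rle_abs (rho (x (Datatypes.S n)) u)).
    pose proof (Htri u (S u) (x (Datatypes.S n))).
    pose proof (HS (x n) u). unfold d in HN2. rewrite HxS in *.
    pose proof (Hnn (S (x n)) (S (x n))).
    rewrite (Hsym u (S (x n))) in *.
    nra. }
  assert (Hfix : S u = u).
  { symmetry. apply Heq. pose proof (HS u u). pose proof (Hnn (S u) (S u)).
    pose proof (Hself (S u) u). rewrite (Hsym (S u) u) in *. nra. }
  exists u. split; [exact Hfix|]. split; [exact Huu|].
  intros c Hcc.
  assert (Hcc0 : rho c c = 0).
  { pose proof (HS c c). rewrite Hcc in H. pose proof (Hnn c c). nra. }
  apply Heq. pose proof (HS c u). rewrite Hcc, Hfix in H.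
  pose proof (Hnn c u). nra.
Qed.
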